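(* Let $\ell_1,\ell_2$ be two distinct intersecting lines in $\mathbb{R}^2$ given by $L_i=0$, where $L_i=A_ix+B_iy+C_i$ (real coefficients), $i=1,2$. For a real constant $C$, let $f(x,y)=L_1^2L_2+L_1+C$ and let $\Gamma$ be the real algebraic curve $f(x,y)=0$. Then $\Gamma$ is asymptotic to the lines $\ell_1$ and $\ell_2$. Moreover, if $C\neq0$, then $f$ is an irreducible bivariate polynomial. *)

(* Defs.v *)
From HB Require Import structures.
From mathcomp Require Import all_boot all_order all_algebra.
From mathcomp Require Import reals.
From mathcomp Require Import mpoly.
Set Implicit Arguments. Unset Strict Implicit. Unset Printing Implicit Defensive.
Import Order.TTheory GRing.Theory Num.Theory.
Local Open Scope ring_scope.

(* The affine linear form L(x,y) = A x + B y + C as a bivariate polynomial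
   in the variables 'X_0 = x and 'X_1 = y. *)
Definition linform (R : realType) (A B C : R) : {mpoly R[2]} :=
  A *: 'X_0 + B *: 'X_1 + C%:MP.

Definition ev2 (R : realType) (p : {mpoly R[2]}) (x y : R) : R :=
  p.@[fun i : 'I_2 => if val i == 0%N then x else y].

(* The line A x + B y + C = 0 (a genuine line requires (A,B) <> (0,0)). *)
Definition line (R : realType) (A B C : R) : R * R -> Prop :=
  fun p => A * p.1 + B * p.2 + C = 0.

Definition zero_set (R : realType) (f : {mpoly R[2]}) : R * R -> Prop :=
  fun p => ev2 f p.1 p.2 = 0.

Definition sqnorm2 (R : realType) (p : R * R) : R := p.1 ^+ 2 + p.2 ^+ 2.
Definition sqdist2 (R : realType) (p q : R * R) : R :=
  (p.1 - q.1) ^+ 2 + (p.2 - q.2) ^+ 2.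

(* A curve G is asymptotic to a set (line) l : there is a sequence of points
   of G tending to infinity whose Euclidean distance to l tends to 0, i.e.
   points q_n of l with |p_n - q_n| -> 0.  Written out with epsilons:
   |p_n| -> +oo  and  |p_n - q_n| -> 0. *)
Definition asymptotic_to (R : realType) (G l : R * R -> Prop) : Prop :=
  exists (p q : nat -> R * R),
    (forall n, G (p n)) /\ (forall n, l (q n)) /\
    (forall M : R, exists N, forall n, (N <= n)%N -> M ^+ 2 < sqnorm2 (p n)) /\
    (forall eps : R, 0 < eps ->
       exists N, forall n, (N <= n)%N -> sqdist2 (p n) (q n) < eps ^+ 2).

Definition irreducible_mpoly (R : realType) (f : {mpoly R[2]}) : Prop :=
  f != 0 /\ f \isn't a GRing.unit /\
  forall g h : {mpoly R[2]}, f = g * h -> g \is a GRing.unit \/ h \is a GRing.unit.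

(* Main.v *)
Require Import Defs.
From HB Require Import structures.
From mathcomp Require Import all_boot all_order all_algebra.
From mathcomp Require Import reals.
From mathcomp Require Import mpoly.
From mathcomp Require Import ring lra zify.
From Stdlib Require FunctionalExtensionality PropExtensionality.
Import Order.TTheory GRing.Theory Num.Theory.
Local Open Scope ring_scope.
Definition FF {R : realType} (C : R) : {poly {poly R}} := (('X ^+ 2))%:P * 'X + ('X + C%:P)%:P.

Lemma FF_size (R : realType) (C : R) : size (FF (R:=R) C) = 2%N.
Proof.
rewrite /FF size_MXaddC polyC_eq0 expf_eq0 polyX_eq0 andbF /= size_polyC expf_eq0 polyX_eq0 andbF.
by [].
Qed.

Lemma FF_coef0 (R : realType) (C : R) : (FF (R:=R) C)`_0 = 'X + C%:P.
Proof. by rewrite /FF coefD coefMX !coefC /= add0r. Qed.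
Lemma FF_coef1 (R : realType) (C : R) : (FF (R:=R) C)`_1 = ('X ^+ 2).
Proof. by rewrite /FF coefD coefMX !coefC /= addr0. Qed.

Lemma key (R : realType) (C : R) (P Q : {poly {poly R}}) : C != 0 ->
  P * Q = FF C -> (size P <= 1)%N -> exists c0, c0 != 0 /\ P = (c0%:P)%:P.
Proof.
move=> C0 PQ sP.
have eP := size1_polyC sP; set c := P`_0 in eP.
have h1 : c %| ('X ^+ 2).
  by rewrite -(@FF_coef1 R C) -PQ eP coefCM dvdp_mulIl.
have h0 : c %| 'X + C%:P.
  by rewrite -(@FF_coef0 R C) -PQ eP coefCM dvdp_mulIl.
have h2 : c %| (C^+2)%:P.
  have -> : (C^+2)%:P = ('X ^+ 2) - ('X + C%:P) * ('X - C%:P) :> {poly R}.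
    rewrite rmorphXn /=; ring.
  by rewrite dvdp_sub // dvdp_mulr.
have cn0 : c != 0.
  apply/eqP => c0; move: (@FF_size R C); rewrite -PQ eP c0 mul0r size_poly0 //.
have := dvdp_leq _ h2; rewrite polyC_eq0 expf_neq0 // size_polyC expf_neq0 // => /(_ isT) sc.
exists c`_0; split; last by rewrite eP {1}(size1_polyC sc).
by move: cn0; rewrite {1}(size1_polyC sc) polyC_eq0.
Qed.

Lemma mpC_unit (R : realType) (c : R) : c != 0 -> (c%:MP : {mpoly R[2]}) \is a GRing.unit.
Proof. move=> c0; apply/unitrP; exists (c^-1)%:MP; by rewrite -!rmorphM mulVf ?mulfV ?rmorph1. Qed.

Section Irr.
Variable R : realType.
Variables A1 B1 C1 A2 B2 C2 : R.
Let L1 := linform A1 B1 C1.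
Let L2 := linform A2 B2 C2.
Definition kk (c : R) : {poly {poly R}} := (c%:P)%:P.
Let D := A1 * B2 - A2 * B1.
Hypothesis D0 : D != 0.
Let U : {poly {poly R}} := ('X)%:P.
Let V : {poly {poly R}} := 'X.
Definition h0 : {poly {poly R}} := kk (B2/D) * (U - kk C1) - kk (B1/D) * (V - kk C2).
Definition h1 : {poly {poly R}} := kk (A1/D) * (V - kk C2) - kk (A2/D) * (U - kk C1).
Definition hh (i : 'I_2) : {poly {poly R}} := if val i == 0%N then h0 else h1.
Definition psi (p : {mpoly R[2]}) := mmap ((@polyC {poly R}) \o (@polyC R)) hh p.
Lemma cf1 : commr_rmorph (@mpolyC 2 R) L1. Proof. by move=> x; apply: mulrC. Qed.
Definition ev1 : {rmorphism {poly R} -> {mpoly R[2]}} := horner_morph cf1.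
Lemma cf2 : commr_rmorph ev1 L2. Proof. by move=> x; apply: mulrC. Qed.
Definition phi : {rmorphism {poly {poly R}} -> {mpoly R[2]}} := horner_morph cf2.

Lemma phi_kk c : phi (kk c) = c%:MP.
Proof. rewrite /kk /phi /= horner_morphC /ev1 /=; exact: horner_morphC. Qed.
Lemma phi_U : phi U = L1.
Proof. rewrite /U /phi /= horner_morphC /ev1 /=; exact: horner_morphX. Qed.
Lemma phi_V : phi V = L2.
Proof. rewrite /V /phi /=; exact: horner_morphX. Qed.

Lemma phi_hh i : phi (hh i) = 'X_i.
Proof.
have [-> | ->] : i = 0 \/ i = 1.
  by case: i => [[|[|]]] //= H; [left|right]; apply/val_inj.
- rewrite (_ : hh 0 = h0) // /h0 !rmorphB !rmorphM !rmorphB !phi_kk phi_U phi_V /L1 /L2 /linform.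
  rewrite -!mul_mpolyC.
  transitivity ((B2/D * A1 - B1/D * A2)%:MP * 'X_0 + (B2/D*B1 - B1/D*B2)%:MP * 'X_1 : {mpoly R[2]}).
    rewrite !rmorphB !rmorphM /=. ring.
  have -> : B2/D * A1 - B1/D * A2 = 1 by rewrite /D; field.
  have -> : B2/D*B1 - B1/D*B2 = 0 by field.
  by rewrite mul1r mul0r addr0.
- rewrite (_ : hh 1 = h1) // /h1 !rmorphB !rmorphM !rmorphB !phi_kk phi_U phi_V /L1 /L2 /linform.
  rewrite -!mul_mpolyC.
  transitivity ((A1/D * A2 - A2/D * A1)%:MP * 'X_0 + (A1/D*B2 - A2/D*B1)%:MP * 'X_1 : {mpoly R[2]}).
    rewrite !rmorphB !rmorphM /=. ring.
  have -> : A1/D*B2 - A2/D*B1 = 1 by rewrite /D; field.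
  have -> : A1/D * A2 - A2/D * A1 = 0 by field.
  by rewrite mul1r mul0r add0r.
Qed.

Lemma phi_psi p : phi (psi p) = p.
Proof.
rewrite {2}(mpolyE p) /psi /mmap rmorph_sum; apply: eq_bigr => m _.
rewrite rmorphM (_ : (polyC \o polyC) p@_m = kk p@_m) // phi_kk /mmap1 rmorph_prod -mul_mpolyC mpolyXE_id; congr (_ * _).
by apply: eq_bigr => i _; rewrite rmorphXn phi_hh.
Qed.

Lemma psiD a b : psi (a + b) = psi a + psi b. Proof. exact: rmorphD. Qed.
Lemma psiM a b : psi (a * b) = psi a * psi b. Proof. exact: rmorphM. Qed.
Lemma psiXn a k : psi (a ^+ k) = psi a ^+ k. Proof. exact: rmorphXn. Qed.
Lemma psiZ c a : psi (c *: a) = kk c * psi a. Proof. exact: mmapZ. Qed.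
Lemma psi_X i : psi 'X_i = hh i.
Proof. by rewrite /psi mmapX mmap1U. Qed.
Lemma psi_C c : psi c%:MP = kk c.
Proof. by rewrite /psi mmapC. Qed.
Lemma psi_lin A B Cc : psi (linform A B Cc) = kk A * hh 0 + kk B * hh 1 + kk Cc.
Proof. by rewrite /linform !psiD !psiZ !psi_X psi_C. Qed.

Lemma psi_L1 : psi L1 = U.
Proof.
rewrite psi_lin (_ : hh 0 = h0) // (_ : hh 1 = h1) // /h0 /h1 /kk.
transitivity (((A1*(B2/D) - B1*(A2/D))%:P)%:P * U + ((- A1*(B1/D) + B1*(A1/D))%:P)%:P * V
   + ((A1*(- (B2/D)*C1 + (B1/D)*C2) + B1*(- (A1/D)*C2 + (A2/D)*C1) + C1)%:P)%:P : {poly {poly R}}).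
  rewrite !rmorphD !rmorphM !rmorphN !rmorphD !rmorphM !rmorphN. ring.
have -> : A1*(B2/D) - B1*(A2/D) = 1 by rewrite /D; field.
have -> : - A1*(B1/D) + B1*(A1/D) = 0 by field.
have -> : A1*(- (B2/D)*C1 + (B1/D)*C2) + B1*(- (A1/D)*C2 + (A2/D)*C1) + C1 = 0 by rewrite /D; field.
by rewrite !rmorph0 !rmorph1 mul1r mul0r !addr0.
Qed.

Lemma psi_L2 : psi L2 = V.
Proof.
rewrite psi_lin (_ : hh 0 = h0) // (_ : hh 1 = h1) // /h0 /h1 /kk.
transitivity (((A2*(B2/D) - B2*(A2/D))%:P)%:P * U + ((- A2*(B1/D) + B2*(A1/D))%:P)%:P * V
   + ((A2*(- (B2/D)*C1 + (B1/D)*C2) + B2*(- (A1/D)*C2 + (A2/D)*C1) + C2)%:P)%:P : {poly {poly R}}).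
  rewrite !rmorphD !rmorphM !rmorphN !rmorphD !rmorphM !rmorphN. ring.
have -> : A2*(B2/D) - B2*(A2/D) = 0 by field.
have -> : - A2*(B1/D) + B2*(A1/D) = 1 by rewrite /D; field.
have -> : A2*(- (B2/D)*C1 + (B1/D)*C2) + B2*(- (A1/D)*C2 + (A2/D)*C1) + C2 = 0 by rewrite /D; field.
by rewrite !rmorph0 !rmorph1 mul1r mul0r add0r addr0.
Qed.

Lemma psi0 : psi 0 = 0. Proof. exact: rmorph0. Qed.
Lemma psi_f C : psi (L1 ^+ 2 * L2 + L1 + C%:MP) = FF C.
Proof.
rewrite psiD (psiD (L1 ^+ 2 * L2)) psiM psiXn psi_L1 psi_L2 psi_C /U /V /kk /FF.
by rewrite rmorphD rmorphXn addrA.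
Qed.

Lemma irr C : C != 0 -> irreducible_mpoly (L1 ^+ 2 * L2 + L1 + C%:MP).
Proof.
move=> C0; set f := _ + C%:MP; have pf := psi_f C; rewrite -/f in pf.
have fn0 : f != 0.
  by apply/eqP => f0; move: (@FF_size R C); rewrite -pf f0 psi0 size_poly0.
split => //; split.
  apply/negP => fu.
  have pu : psi f \is a GRing.unit by exact: rmorph_unit.
  by move: pu; rewrite pf poly_unitE FF_size.
move=> g h fgh.
have gh : psi g * psi h = FF C by rewrite -psiM -fgh.
have gn0 : g != 0 by apply: contraNneq fn0 => g0; rewrite fgh g0 mul0r.
have hn0 : h != 0 by apply: contraNneq fn0 => h0; rewrite fgh h0 mulr0.
have pgn0 : psi g != 0 by apply: contraNneq gn0 => e; rewrite -(phi_psi g) e rmorph0.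
have phn0 : psi h != 0 by apply: contraNneq hn0 => e; rewrite -(phi_psi h) e rmorph0.
have sz := size_mul pgn0 phn0; rewrite gh FF_size in sz.
have s1 : (0 < size (psi g))%N by rewrite size_poly_gt0.
have s2 : (0 < size (psi h))%N by rewrite size_poly_gt0.
have [sg | sh] : (size (psi g) <= 1)%N \/ (size (psi h) <= 1)%N.
  move: sz s1 s2; move: (size (psi g)) (size (psi h)) => a b; clear; lia.
  left; have [c0 [c0n e]] := @key R C _ _ C0 gh sg.
  by rewrite -(phi_psi g) e -[(c0%:P)%:P]/(kk c0) phi_kk mpC_unit.
right; rewrite mulrC in gh; have [c0 [c0n e]] := @key R C _ _ C0 gh sh.
by rewrite -(phi_psi h) e -[(c0%:P)%:P]/(kk c0) phi_kk mpC_unit.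
Qed.
End Irr.




Lemma bigN {R : realType} (T : R) : exists N : nat, forall n, (N <= n)%N -> T < (n.+1)%:R.
Proof.
exists (Num.bound `|T|) => n Hn.
have h1 := archi_boundP (normr_ge0 T).
have h2 : T <= `|T| := ler_norm T.
have h3 : (Num.bound `|T|)%:R <= (n.+1)%:R :> R by rewrite ler_nat; lia.
lra.
Qed.

Lemma t_ge1 {R : realType} (n : nat) : 1 <= (n.+1)%:R :> R.
Proof. by rewrite ler1n. Qed.

Lemma N2_gt0 {R : realType} (A B : R) : (A, B) != (0, 0) -> 0 < A^+2 + B^+2.
Proof.
rewrite xpair_eqE negb_and => /orP[] h.
  have : 0 < A ^+ 2 by rewrite exprn_even_gt0.
  nra.
have : 0 < B ^+ 2 by rewrite exprn_even_gt0.
nra.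
Qed.

Lemma grow {R : realType} (A B Cc : R) (p : nat -> R * R) :
  (A, B) != (0, 0) ->
  (forall n, (n.+1)%:R ^+ 2 <= (A * (p n).1 + B * (p n).2 + Cc) ^+ 2) ->
  forall M : R, exists N, forall n, (N <= n)%N -> M ^+ 2 < sqnorm2 (p n).
Proof.
move=> AB H M.
have N2 := N2_gt0 A B AB.
have [N HN] := bigN (2 * (Cc ^+ 2 + (A^+2 + B^+2) * M ^+ 2 + 1)).
exists N => n /HN Hn; have Hw := H n; have t1 := @t_ge1 R n.
rewrite /sqnorm2.
move: Hn Hw t1; set t := (n.+1)%:R; set x := (p n).1; set y := (p n).2 => Hn Hw t1.
set N2' := A^+2 + B^+2 in N2 Hn.
have e : N2' * (x^+2 + y^+2) = (A*x + B*y)^+2 + (A*y - B*x)^+2 by rewrite /N2'; ring.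
have e2 : (A*x + B*y)^+2 >= t^+2 / 2 - Cc^+2.
  have : 0 <= (A*x+B*y+Cc - 2 * Cc)^+2 by apply: sqr_ge0.
  nra.
have e3 : t^+2 >= t by nra.
have e4 : (A*x + B*y)^+2 > N2' * M^+2 by nra.
have e5 : 0 <= (A*y - B*x)^+2 by apply: sqr_ge0.
nra.
Qed.

Lemma asym {R : realType} (A B Cc : R) (G : R * R -> Prop) (p : nat -> R * R) (K : R) :
  (A, B) != (0, 0) ->
  (forall n, G (p n)) ->
  (forall M : R, exists N, forall n, (N <= n)%N -> M ^+ 2 < sqnorm2 (p n)) ->
  (forall n, (A * (p n).1 + B * (p n).2 + Cc) ^+ 2 * (n.+1)%:R ^+ 2 <= K) ->
  asymptotic_to G (line A B Cc).
Proof.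
move=> AB HG HM HK.
have N2 := N2_gt0 A B AB.
set N2' := A^+2 + B^+2 in N2.
pose w n := A * (p n).1 + B * (p n).2 + Cc.
exists p, (fun n => ((p n).1 - w n / N2' * A, (p n).2 - w n / N2' * B)).
split; first done. split.
  move=> n; rewrite /line /= /w /N2'; field.
  by rewrite lt0r_neq0 // -/N2'.
split; first done.
move=> eps eps0.
have [N HN] := bigN (K / (N2' * eps ^+ 2)).
exists N => n /HN Hn; have Hw := HK n; have t1 := @t_ge1 R n.
rewrite /sqdist2 /=.
move: Hn Hw t1; rewrite -/(w n); set t := (n.+1)%:R; set ww := w n => Hn Hw t1.
have E : ((p n).1 - ((p n).1 - ww / N2' * A)) ^+ 2 + ((p n).2 - ((p n).2 - ww / N2' * B)) ^+ 2
   = ww ^+ 2 / N2'.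
  by rewrite /N2'; field; rewrite -/N2' lt0r_neq0.
rewrite E ltr_pdivrMr //.
have pe : 0 < N2' * eps ^+ 2 by rewrite mulr_gt0 // exprn_gt0.
have Hn' : K < t * (N2' * eps ^+ 2) by rewrite -ltr_pdivrMr.
have : ww ^+ 2 * t ^+ 2 < t * (N2' * eps ^+ 2) by lra.
have w0 : 0 <= ww ^+ 2 by apply: sqr_ge0.
nra.
Qed.
Lemma par_aux {R : realType} (A1 B1 A2 B2 a b : R) : (A1, B1) != (0, 0) ->
  A1 * B2 - A2 * B1 = 0 -> A1 * a + B1 * b = 0 -> A2 * a + B2 * b = 0.
Proof.
move=> h D0 e.
have e1 : A1 * (A2 * a + B2 * b) = 0.
  have -> : A1 * (A2 * a + B2 * b) = A2 * (A1 * a + B1 * b) + b * (A1 * B2 - A2 * B1) by ring.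
  by rewrite e D0 !mulr0 addr0.
have e2 : B1 * (A2 * a + B2 * b) = 0.
  have -> : B1 * (A2 * a + B2 * b) = B2 * (A1 * a + B1 * b) - a * (A1 * B2 - A2 * B1) by ring.
  by rewrite e D0 !mulr0 subr0.
move: h; rewrite xpair_eqE negb_and => /orP[] h.
  by move/eqP: e1; rewrite mulf_eq0 (negbTE h) => /eqP.
by move/eqP: e2; rewrite mulf_eq0 (negbTE h) => /eqP.
Qed.

Lemma Dn0 {R : realType} (A1 B1 C1 A2 B2 C2 : R) :
  (A1, B1) != (0, 0) -> (A2, B2) != (0, 0) ->
  line A1 B1 C1 <> line A2 B2 C2 ->
  (exists p : R * R, line A1 B1 C1 p /\ line A2 B2 C2 p) ->
  A1 * B2 - A2 * B1 != 0.
Proof.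
move=> h1 h2 hne [[x0 y0] [l1 l2]]; apply/eqP => D0; apply: hne.
apply: FunctionalExtensionality.functional_extensionality => q.
apply: PropExtensionality.propositional_extensionality.
rewrite /line /= in l1 l2 *; split => lq.
  have := @par_aux R A1 B1 A2 B2 (q.1 - x0) (q.2 - y0) h1 D0.
  have -> : A1 * (q.1 - x0) + B1 * (q.2 - y0) = 0 by rewrite -(subr0 0) -{1}lq -l1; ring.
  move=> /(_ erefl) e.
  have -> : A2 * q.1 + B2 * q.2 + C2 = A2 * (q.1 - x0) + B2 * (q.2 - y0) + (A2 * x0 + B2 * y0 + C2) by ring.
  by rewrite e l2 addr0.
have D0' : A2 * B1 - A1 * B2 = 0 by rewrite -opprB D0 oppr0.
have := @par_aux R A2 B2 A1 B1 (q.1 - x0) (q.2 - y0) h2 D0'.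
have -> : A2 * (q.1 - x0) + B2 * (q.2 - y0) = 0 by rewrite -(subr0 0) -{1}lq -l2; ring.
move=> /(_ erefl) e.
have -> : A1 * q.1 + B1 * q.2 + C1 = A1 * (q.1 - x0) + B1 * (q.2 - y0) + (A1 * x0 + B1 * y0 + C1) by ring.
by rewrite e l1 addr0.
Qed.

Lemma ev2_lin {R : realType} (A B Cc x y : R) : ev2 (linform A B Cc) x y = A * x + B * y + Cc.
Proof. by rewrite /ev2 /linform !mevalD !mevalZ !mevalXU mevalC. Qed.

Lemma ev2_f {R : realType} (A1 B1 C1 A2 B2 C2 C x y : R) :
  ev2 (linform A1 B1 C1 ^+ 2 * linform A2 B2 C2 + linform A1 B1 C1 + C%:MP) x y =
  (A1 * x + B1 * y + C1) ^+ 2 * (A2 * x + B2 * y + C2) + (A1 * x + B1 * y + C1) + C.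
Proof.
rewrite /ev2 /linform expr2 !mevalD !mevalM !mevalD !mevalZ !mevalXU !mevalC /=; ring.
Qed.

Section Asym.
Variable R : realType.
Variables A1 B1 C1 A2 B2 C2 C : R.
Hypothesis h1 : (A1, B1) != (0, 0).
Hypothesis h2 : (A2, B2) != (0, 0).
Hypothesis D0 : A1 * B2 - A2 * B1 != 0.
Let D := A1 * B2 - A2 * B1.
Definition XX (u v : R) := (B2 * (u - C1) - B1 * (v - C2)) / D.
Definition YY (u v : R) := (A1 * (v - C2) - A2 * (u - C1)) / D.
Lemma XY1 u v : A1 * XX u v + B1 * YY u v + C1 = u.
Proof. by rewrite /XX /YY /D; field. Qed.
Lemma XY2 u v : A2 * XX u v + B2 * YY u v + C2 = v.
Proof. by rewrite /XX /YY /D; field. Qed.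
Let f := linform A1 B1 C1 ^+ 2 * linform A2 B2 C2 + linform A1 B1 C1 + C%:MP.

Lemma tn0 (n : nat) : (n.+1)%:R != 0 :> R.
Proof. by rewrite pnatr_eq0. Qed.

Lemma asym1 : asymptotic_to (zero_set f) (line A1 B1 C1).
Proof.
pose s : R := if 0 <= C then 1 else -1.
pose u n := s / (n.+1)%:R.
pose v n := - (s * (n.+1)%:R + C * (n.+1)%:R ^+ 2).
pose p n := (XX (u n) (v n), YY (u n) (v n)).
have L1p n : A1 * (p n).1 + B1 * (p n).2 + C1 = u n by rewrite XY1.
have L2p n : A2 * (p n).1 + B2 * (p n).2 + C2 = v n by rewrite XY2.
apply: (@asym R A1 B1 C1 _ p 1 h1).
- move=> n; rewrite /zero_set /f ev2_f L1p L2p /u /v /s.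
  have := tn0 n; case: ifP => _ tn; field; rewrite ?nat1r //.
- apply: (@grow R A2 B2 C2 p h2) => n; rewrite L2p /v /s.
  have t1 := @t_ge1 R n; have t2 : 0 <= (n.+1)%:R ^+ 2 :> R by apply: sqr_ge0.
  move: t1 t2; set t := (n.+1)%:R => t1 t2.
  case: (lerP 0 C) => hC.
    have a0 : 0 <= C * t ^+ 2 by rewrite mulr_ge0.
    move: a0; set a := C * t ^+ 2 => a0; nra.
  have a0 : 0 <= - C * t ^+ 2 by rewrite mulr_ge0 // oppr_ge0 ltW.
  move: a0; rewrite mulNr; set a := C * t ^+ 2 => a0; nra.
- move=> n; rewrite L1p /u /s; have := tn0 n; case: ifP => _ tn.
  + have e : (1 / (n.+1)%:R) ^+ 2 * (n.+1)%:R ^+ 2 = 1 :> R by field; rewrite ?nat1r.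
    by rewrite e.
  + have e : (-1 / (n.+1)%:R) ^+ 2 * (n.+1)%:R ^+ 2 = 1 :> R by field; rewrite ?nat1r.
    by rewrite e.
Qed.

Lemma asym2 : asymptotic_to (zero_set f) (line A2 B2 C2).
Proof.
pose u n := (n.+1)%:R : R.
pose v n := - (u n + C) / u n ^+ 2.
pose p n := (XX (u n) (v n), YY (u n) (v n)).
have L1p n : A1 * (p n).1 + B1 * (p n).2 + C1 = u n by rewrite XY1.
have L2p n : A2 * (p n).1 + B2 * (p n).2 + C2 = v n by rewrite XY2.
apply: (@asym R A2 B2 C2 _ p (2 * (1 + C ^+ 2)) h2).
- move=> n; rewrite /zero_set /f ev2_f L1p L2p /v.
  have := tn0 n; rewrite -/(u n) => tn; field; rewrite ?nat1r //.
- by apply: (@grow R A1 B1 C1 p h1) => n; rewrite L1p.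
- move=> n; rewrite L2p /v; have := tn0 n; have := @t_ge1 R n; rewrite -/(u n) => t1 tn.
  rewrite (_ : _ * _ = (u n + C) ^+ 2 / u n ^+ 2); last by field; rewrite ?nat1r.
  rewrite ler_pdivrMr; last by rewrite exprn_gt0 // (lt_le_trans ltr01).
  have : 0 <= (u n - C) ^+ 2 by apply: sqr_ge0.
  have : 0 <= C ^+ 2 by apply: sqr_ge0.
  nra.
Qed.
End Asym.

Theorem lemma5 (R : realType) (A1 B1 C1 A2 B2 C2 C : R) :
  (* l1, l2 are lines *)
  (A1, B1) != (0, 0) -> (A2, B2) != (0, 0) ->
  (* distinct *)
  line A1 B1 C1 <> line A2 B2 C2 ->
  (* intersecting *)
  (exists p : R * R, line A1 B1 C1 p /\ line A2 B2 C2 p) ->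
  let L1 := linform A1 B1 C1 in
  let L2 := linform A2 B2 C2 in
  let f := L1 ^+ 2 * L2 + L1 + C%:MP in
  (asymptotic_to (zero_set f) (line A1 B1 C1) /\
   asymptotic_to (zero_set f) (line A2 B2 C2)) /\
  (C != 0 -> irreducible_mpoly f).
Proof.
move=> h1 h2 hne hex L1 L2 f.
have D0 := @Dn0 R A1 B1 C1 A2 B2 C2 h1 h2 hne hex.
split; first split.
- exact: (@asym1 R A1 B1 C1 A2 B2 C2 C h1 h2 D0).
- exact: (@asym2 R A1 B1 C1 A2 B2 C2 C h1 h2 D0).
- by move=> C0; exact: (@irr R A1 B1 C1 A2 B2 C2 D0 C C0).
Qed.
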